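(* Let $X\subset\mathbb{R}^n$ be closed, equal to the closure of its interior, and invariant under translation by a vector $v\in\mathbb{R}^n$ (i.e. $x\in X\Rightarrow x+\lambda v\in X$ for all $\lambda\in\mathbb{R}$), and let $f:X\to\mathbb{R}^n$ be locally Lipschitz, with flow $\varphi_t$ of $\dot x=f(x)$ (solutions unique and maximally defined, defined at least for all $t\ge 0$). Then the flow satisfies $\varphi_t(\xi+\lambda v)=\varphi_t(\xi)+\lambda v$ for all $\lambda\in\mathbb{R}$, all $\xi\in X$ and all admissible $t$ if and only if: for all $x_1,x_2\in X$ with $x_1-x_2\in\operatorname{span}\{v\}$ one has $f(x_1)=f(x_2)$. *)

(* Defs.v *)
From HB Require Import structures.
From mathcomp Require Import all_boot all_order all_algebra.
From mathcomp Require Import all_classical all_reals all_analysis.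
Set Implicit Arguments. Unset Strict Implicit. Unset Printing Implicit Defensive.
Import Order.TTheory GRing.Theory Num.Theory.
Import numFieldNormedType.Exports.
Local Open Scope classical_set_scope.
Local Open Scope ring_scope.

(* f : X -> R^n is locally Lipschitz on X (values of f outside X are irrelevant). *)
Definition locally_lipschitz_on {R : realType} {n : nat}
  (X : set 'rV[R]_n) (f : 'rV[R]_n -> 'rV[R]_n) : Prop :=
  forall x, X x -> exists2 r : R, 0 < r & exists L : R,
    forall y z, X y -> X z -> `|y - x| < r -> `|z - x| < r ->
      `|f y - f z| <= L * `|y - z|.

Definition is_solution_on {R : realType} {n : nat}
  (X : set 'rV[R]_n) (f : 'rV[R]_n -> 'rV[R]_n)
  (T : \bar R) (xi : 'rV[R]_n) (y : R -> 'rV[R]_n) : Prop :=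
  y 0 = xi /\
  (forall t : R, 0 <= t -> (t%:E < T)%E -> X (y t)) /\
  ((0%:E < T)%E -> y x @[x --> 0^'+] --> y 0) /\
  (forall t : R, 0 < t -> (t%:E < T)%E -> is_derive t (1 : R) y (f (y t))).

Definition is_forward_flow {R : realType} {n : nat}
  (X : set 'rV[R]_n) (f : 'rV[R]_n -> 'rV[R]_n)
  (phi : R -> 'rV[R]_n -> 'rV[R]_n) : Prop :=
  (forall xi, X xi -> is_solution_on X f +oo%E xi (fun t => phi t xi)) /\
  (forall xi (T : \bar R) (y : R -> 'rV[R]_n), X xi -> is_solution_on X f T xi y ->
     forall t : R, 0 <= t -> (t%:E < T)%E -> y t = phi t xi).

(* Main.v *)
Require Import Defs.
From HB Require Import structures.
From mathcomp Require Import all_boot all_order all_algebra.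
From mathcomp Require Import all_classical all_reals all_analysis.
From mathcomp Require Import lra.
Import Order.TTheory GRing.Theory Num.Theory.
Import numFieldNormedType.Exports.
Local Open Scope classical_set_scope.
Local Open Scope ring_scope.

Lemma cvg_f_flow (R : realType) (n : nat) (X : set 'rV[R]_n)
  (f : 'rV[R]_n -> 'rV[R]_n) (phi : R -> 'rV[R]_n -> 'rV[R]_n) x :
  locally_lipschitz_on X f -> is_forward_flow X f phi -> X x ->
  (fun t => f (phi t x)) @ 0^'+ --> f x.
Proof.
move=> Hlip [Hsol _] Xx.
have [H0 [HX [Hc _]]] := Hsol x Xx.
have /= {}Hc := Hc (ltry 0).
have [r r0 [L HL]] := Hlip x Xx.
apply/cvgrPdist_lt => e e0.
have q0 : 0 < e / (`|L| + 1) by apply: divr_gt0 => //; rewrite ltr_wpDl.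
have m0 : 0 < Num.min r (e / (`|L| + 1)) by rewrite lt_min r0 q0.
move/cvgrPdist_lt: Hc => /(_ _ m0); rewrite H0 => Hc.
near=> t.
have t0 : 0 < t by near: t; exact: nbhs_right_gt.
have : `|x - phi t x| < Num.min r (e / (`|L| + 1)) by near: t; exact: Hc.
rewrite lt_min => /andP[dr dq].
have Xt := HX t (ltW t0) (ltry _).
have := HL x (phi t x) Xx Xt; rewrite subrr normr0 (distrC (phi t x)) => /(_ r0 dr) HLt.
apply: (le_lt_trans HLt).
set d := `|x - phi t x| in dq *.
set a := `|L|.
have a0 : 0 <= a by rewrite /a normr_ge0.
have d0 : 0 <= d by rewrite /d normr_ge0.
have La : L <= a by apply: real_ler_norm; exact: num_real.
have eq : e = (e / (a + 1)) * (a + 1) by rewrite mulfVK // gt_eqF // ltr_wpDl.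
move: dq eq; move: (e / (a + 1)) => q dq ->; nra.
Unshelve. all: by end_near.
Qed.

Theorem lemma1 (R : realType) (n : nat) (X : set 'rV[R]_n) (v : 'rV[R]_n)
  (f : 'rV[R]_n -> 'rV[R]_n) (phi : R -> 'rV[R]_n -> 'rV[R]_n) :
  closed X ->
  X = closure (X°) ->
  (forall x (lam : R), X x -> X (x + lam *: v)) ->
  locally_lipschitz_on X f ->
  is_forward_flow X f phi ->
  (forall (t : R) (xi : 'rV[R]_n) (lam : R), 0 <= t -> X xi ->
      phi t (xi + lam *: v) = phi t xi + lam *: v)
  <->
  (forall x1 x2 : 'rV[R]_n, X x1 -> X x2 ->
      (exists lam : R, x1 - x2 = lam *: v) -> f x1 = f x2).
Proof.
move=> _ _ Hinv Hlip Hflow; have [Hsol Huniq] := Hflow; split.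
- move=> Heq x1 x2 X1 X2 [lam Hl].
  have ex1 : x1 = x2 + lam *: v by rewrite -Hl addrC subrK.
  have key : forall t, 0 < t -> f (phi t x1) = f (phi t x2).
    move=> t t0.
    have [_ [_ [_ D1]]] := Hsol x1 X1.
    have [_ [_ [_ D2]]] := Hsol x2 X2.
    have d1 := D1 t t0 (ltry _).
    have d2 : is_derive t (1:R) (fun s => phi s x2 + lam *: v) (f (phi t x2)).
      apply: is_derive_eq; first exact: (is_deriveD (f := fun s => phi s x2) (g := cst (lam *: v)) (D2 t t0 (ltry _)) (is_derive_cst _ _ _)).
      by rewrite addr0.
    have e1 := @derive_val _ _ _ _ _ _ _ d1.
    have e2 := @derive_val _ _ _ _ _ _ _ d2.
    rewrite -e1 -e2; apply: near_eq_derive.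
    near=> s.
    have s0 : 0 < s by near: s; exact: lt_nbhsr.
    by rewrite ex1 Heq // ltW.
  have c1 := @cvg_f_flow R n X f phi x1 Hlip Hflow X1.
  have c2 := @cvg_f_flow R n X f phi x2 Hlip Hflow X2.
  have H2 : (fun t => f (phi t x1) - f (phi t x2)) @ 0^'+ --> f x1 - f x2 by apply: cvgB.
  have H : (fun t => f (phi t x1) - f (phi t x2)) @ 0^'+ --> (0 : 'rV[R]_n).
    apply/cvgrPdist_lt => e e0; near=> t.
    have t0 : 0 < t by near: t; exact: nbhs_right_gt.
    by rewrite /= key // subrr subrr normr0.
  have := cvg_unique _ H H2.
  by move=> /(_ _) E; apply/eqP; rewrite -subr_eq0 -E.
- move=> Hf t xi lam t0 Xi.
  have Xl := Hinv xi lam Xi.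
  have [H0 [HX [Hc HD]]] := Hsol xi Xi.
  symmetry; apply: (Huniq (xi + lam *: v) +oo%E (fun s => phi s xi + lam *: v) Xl) => //; last exact: ltry.
  split; first by rewrite H0.
  split; first by move=> s s0 _; apply: Hinv; exact: HX s s0 (ltry _).
  split.
    move=> _; apply: (cvgD (Hc (ltry 0)) (cvg_cst (lam *: v))).
  move=> s s0 _.
  apply: is_derive_eq; first exact: (is_deriveD (f := fun s => phi s xi) (g := cst (lam *: v)) (HD s s0 (ltry _)) (is_derive_cst _ _ _)).
  rewrite addr0; apply: Hf.
  - exact: HX (ltW s0) (ltry _).
  - exact: Hinv (HX _ (ltW s0) (ltry _)).
  - by exists (-lam); rewrite opprD addrA subrr add0r scaleNr.
Unshelve. all: by end_near.
Qed.
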